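(* For all $k,m\in\mathbf N$, $$\sum_{i=1}^{k-1}(-1)^{k-1-i}\sum_{d\mid m}\alpha_i(d)=\alpha_k(m)+(-1)^k\alpha_1(m).$$
   Context: For $k,m\in\mathbf N=\{1,2,\dots\}$, $\alpha_k(m)$ is the number of $k$-tuples $(m_1,\dots,m_k)$ of integers $m_i\ge2$ with $m_1m_2\cdots m_k=m$. The inner sum is over positive divisors $d$ of $m$. *)

(* Defs.v *)
From mathcomp Require Import all_boot all_order all_algebra.
Set Implicit Arguments. Unset Strict Implicit. Unset Printing Implicit Defensive.

(* alpha k m = number of k-tuples (m_1,...,m_k) of integers m_i >= 2 with
   m_1 * ... * m_k = m.  For m >= 1 every such m_i divides m, hence m_i <= m,
   so it suffices to enumerate tuples with entries in {0,...,m}. *)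
Definition alpha (k m : nat) : nat :=
  #|[set t : {ffun 'I_k -> 'I_m.+1} |
      [forall i, 2 <= t i] && (\prod_(i < k) (t i : nat) == m)]|.

(* Main.v *)
Require Import Defs.
From mathcomp Require Import all_boot all_order all_algebra zify ring.
Import GRing.Theory.

Definition A N k m := \sum_(t : {ffun 'I_k -> 'I_N.+1})
  ([forall i, 2 <= t i] && (\prod_(i < k) (t i : nat) == m) : nat).

Lemma alphaE k m : alpha k m = A m k m.
Proof.
rewrite /alpha /A -sum1_card big_mkcond /=; apply: eq_bigr => t _.
by rewrite inE; case: (_ && _).
Qed.

Lemma A0 N m : A N 0 m = (1 == m).
Proof.
pose t0 : {ffun 'I_0 -> 'I_N.+1} := [ffun i => ord0].
rewrite /A (eq_bigr (fun _ => (1 == m) : nat)).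
  by rewrite sum_nat_const card_ffun !card_ord expn0 mul1n.
move=> t _; rewrite big_ord0.
have -> : [forall i, 2 <= t i] by apply/forallP => -[].
by [].
Qed.

Section Split.
Variables (N k : nat).
Definition hcons (p : 'I_N.+1 * {ffun 'I_k -> 'I_N.+1}) : {ffun 'I_k.+1 -> 'I_N.+1} :=
  [ffun i => if unlift ord0 i is Some j then p.2 j else p.1].
Definition gsplit (t : {ffun 'I_k.+1 -> 'I_N.+1}) :=
  (t ord0, [ffun j => t (lift ord0 j)]).
Lemma hcons_bij : bijective hcons.
Proof.
exists gsplit.
  move=> [x u]; rewrite /gsplit /hcons /= ffunE unlift_none; congr (_, _).
  by apply/ffunP => j; rewrite !ffunE liftK.
move=> t; apply/ffunP => i; rewrite /gsplit /hcons ffunE /=.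
by case: unliftP => [j ->|->]; rewrite ?ffunE.
Qed.
End Split.
Arguments hcons {N k}.

Lemma AS N k m : A N k.+1 m =
  \sum_(x < N.+1) ((2 <= x) && (x %| m)) * A N k (m %/ x).
Proof.
rewrite /A (reindex (@hcons N k)); last by apply: onW_bij; apply: hcons_bij.
rewrite -(pair_big xpredT xpredT (fun x u => ([forall i, 2 <= hcons (x, u) i]
   && (\prod_(i < k.+1) (hcons (x, u) i : nat) == m) : nat))) /=.
apply: eq_bigr => x _; rewrite big_distrr /=; apply: eq_bigr => u _.
have E1 : [forall i, 2 <= hcons (x, u) i] = (2 <= x) && [forall j, 2 <= u j].
  apply/forallP/andP => [H|[H1 /forallP H2] i].
    split; first by have := H ord0; rewrite ffunE unlift_none.
    by apply/forallP => j; have := H (lift ord0 j); rewrite ffunE liftK.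
  by rewrite ffunE; case: unliftP => [j _|_].
rewrite E1 big_ord_recl ffunE unlift_none.
rewrite (eq_bigr (fun i => (u i : nat))); last by move=> i _; rewrite ffunE liftK.
case: (leqP 2 x) => hx //=.
have x0 : 0 < x by apply: leq_trans hx.
case: (boolP (x %| m)) => hd /=.
  by rewrite mul1n -{1}(divnK hd) (mulnC (m %/ x)) eqn_pmul2l.
have -> : (x * \prod_(i < k) (u i : nat) == m) = false.
  by apply/negbTE; apply: contra hd => /eqP <-; exact: dvdn_mulr.
by rewrite andbF.
Qed.

Fixpoint B k m := match k with
  | 0 => ((m == 1) : nat)
  | k'.+1 => \sum_(d <- divisors m | d != 1) B k' (m %/ d) end.

Lemma sum_ord_div N m (F : nat -> nat) : 0 < m -> m <= N ->
  \sum_(x < N.+1 | x %| m) F x = \sum_(d <- divisors m) F d.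
Proof.
move=> m0 mN; rewrite -(big_mkord (fun x => x %| m)) -big_filter.
apply: perm_big; apply: uniq_perm; first by rewrite filter_uniq ?iota_uniq.
  exact: divisors_uniq.
move=> d; rewrite mem_filter mem_iota -dvdn_divisors // add0n.
case: (boolP (d %| m)) => //= hd; rewrite ltnS (leq_trans (dvdn_leq m0 hd) mN).
by [].
Qed.

Lemma AB k N m : 0 < m -> m <= N -> A N k m = B k m.
Proof.
elim: k m => [|k IH] m m0 mN; first by rewrite A0 /= eq_sym.
rewrite AS /=.
rewrite (eq_bigr (fun x : 'I_N.+1 => if x %| m then ((x : nat) != 1) * B k (m %/ x) else 0)); last first.
  move=> x _; case: (boolP (x %| m)) => hd; last by rewrite andbF mul0n.
  have x0 : 0 < x.
    by move: hd; case: (nat_of_ord x) => //; rewrite dvd0n => /eqP mE; rewrite mE in m0.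
  rewrite andbT IH.
  - by rewrite ltn_neqAle eq_sym x0 andbT.
  - by rewrite divn_gt0 // dvdn_leq.
  - exact: leq_trans (leq_div _ _) mN.
rewrite -big_mkcond (@sum_ord_div N m (fun d => (d != 1) * B k (m %/ d))) //.
rewrite [RHS]big_mkcond; apply: eq_bigr => d _; by case: (d != 1); rewrite ?mul1n ?mul0n.
Qed.

Lemma alphaB k m : 0 < m -> alpha k m = B k m.
Proof. by move=> m0; rewrite alphaE AB. Qed.

Lemma divdivK m d : 0 < m -> d %| m -> m %/ (m %/ d) = d.
Proof. by move=> m0 hd; rewrite divnA // mulKn. Qed.

Lemma sum_div_rev m (F : nat -> nat) : 0 < m ->
  \sum_(d <- divisors m) F (m %/ d) = \sum_(d <- divisors m) F d.
Proof.
move=> m0; rewrite -(big_map (fun d => m %/ d) xpredT F).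
apply: perm_big; apply: uniq_perm; last first.
- move=> d; apply/mapP/idP => [[e he ->]|hd].
    by rewrite -dvdn_divisors // dvdn_div // dvdn_divisors.
  exists (m %/ d); first by rewrite -dvdn_divisors // dvdn_div // dvdn_divisors.
  by rewrite divdivK // dvdn_divisors.
- exact: divisors_uniq.
- rewrite map_inj_in_uniq ?divisors_uniq // => d e hd he E.
  by rewrite -(@divdivK m d m0) ?E ?divdivK ?dvdn_divisors.
Qed.

Lemma keyB i m : 0 < m -> \sum_(d <- divisors m) B i d = B i.+1 m + B i m.
Proof.
move=> m0; rewrite -(@sum_div_rev m (B i) m0).
rewrite (bigD1_seq 1) ?divisor1 ?divisors_uniq //= divn1 addnC.
by [].
Qed.

Lemma keyA i m : 0 < m -> \sum_(d <- divisors m) alpha i d = alpha i.+1 m + alpha i m.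
Proof.
move=> m0; rewrite !alphaB // -keyB // big_seq [RHS]big_seq.
apply: eq_bigr => d hd; rewrite alphaB //.
move: hd; rewrite -dvdn_divisors //; case: d => //; rewrite dvd0n => /eqP mE.
by rewrite mE in m0.
Qed.

Local Open Scope ring_scope.

Lemma sumz (s : seq nat) (F : nat -> nat) :
  \sum_(d <- s) (F d)%:Z = (\sum_(d <- s) F d)%N%:Z.
Proof. by elim: s => [|x s IH]; rewrite ?big_nil // !big_cons IH PoszD. Qed.


Lemma tele (c : nat -> int) k : (0 < k)%N ->
  \sum_(1 <= i < k) (-1) ^+ (k - 1 - i)%N * (c i.+1 + c i)
  = c k + (-1) ^+ k * c 1%N.
Proof.
elim: k => // k IH _; case: (posnP k) => [->|k0].
  by rewrite big_geq // expr1 mulN1r addrN.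
rewrite big_nat_recr //=.
have -> : (k.+1 - 1 - k = 0)%N by lia.
rewrite expr0 mul1r.
rewrite (eq_big_nat _ _ (F2 := fun i => - ((-1) ^+ (k - 1 - i)%N * (c i.+1 + c i)))); last first.
  move=> i /andP[_ hi].
  have -> : (k.+1 - 1 - i = (k - 1 - i).+1)%N by lia.
  by rewrite exprS mulN1r mulNr.
rewrite sumrN IH // exprS mulN1r mulNr opprD; ring.
Qed.

Theorem lemma4p2 (k m : nat) (hk : (0 < k)%N) (hm : (0 < m)%N) :
  \sum_(1 <= i < k) (-1) ^+ (k - 1 - i)%N *
      (\sum_(d <- divisors m) (alpha i d)%:Z)
  = (alpha k m)%:Z + (-1) ^+ k * (alpha 1 m)%:Z.
Proof.
rewrite -(@tele (fun i => (alpha i m)%:Z) k hk).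
apply: eq_bigr => i _; by rewrite sumz keyA // PoszD.
Qed.
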